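(* Let $d\ge1$ and let $P$ be a probability distribution on $\{0,1\}^d$ with $P(\nu)>0$ for all $\nu\in\{0,1\}^d$. Fix $\omega\in\{0,1\}^d$. Let $A_\omega$ be the $(2^d-1)\times d$ binary matrix with rows indexed by $\nu\in\{0,1\}^d\setminus\{\omega\}$ and entries $A_\omega(\nu,i):=1$ if $\nu_i\ne\omega_i$ and $0$ otherwise, and let $b_\omega$ be the vector indexed by $\nu\in\{0,1\}^d\setminus\{\omega\}$ with $b_\omega(\nu):=\ln(P(\nu)/P(\omega))$. Then, under the bijection $q\mapsto y$, $y_i=(1-2\omega_i)\ln\left(\frac{q_i}{1-q_i}\right)$, from $(0,1)^d$ onto $\mathbb{R}^d$, the set $\mathcal{Q}_\omega\cap(0,1)^d$ corresponds exactly to the set of $y\in\mathbb{R}^d$ satisfying the coordinatewise inequalities $A_\omega y\le b_\omega$.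
   Context: For $\omega\in\{0,1\}^d$ and $q\in[0,1]^d$, $f_\omega(q):=\prod_{i=1}^d q_i^{-\omega_i}(1-q_i)^{\omega_i-1}\in\mathbb{R}\cup\{+\infty\}$ (with $0^0=1$, $1/0=+\infty$), and $\mathcal{Q}_\omega:=\{q\in[0,1]^d\mid \forall\nu\in\{0,1\}^d:\ P(\omega)f_\omega(q)\le P(\nu)f_\nu(q)\}$. *)

(* Defs.v *)
From HB Require Import structures.
From mathcomp Require Import all_boot all_order all_algebra.
From mathcomp Require Import all_classical all_reals all_analysis.
Set Implicit Arguments. Unset Strict Implicit. Unset Printing Implicit Defensive.
Import Order.TTheory GRing.Theory Num.Theory.
Local Open Scope ring_scope.
Local Open Scope classical_set_scope.

(* The cube {0,1}^d is {ffun 'I_d -> bool}; points q of [0,1]^d are functions 'I_d -> R. *)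
Definition cube (d : nat) := {ffun 'I_d -> bool}.

Definition inv_ext (R : realType) (x : R) : \bar R :=
  if x == 0 then +oo%E else (x^-1)%:E.

(* f_omega(q) = prod_i q_i^{-omega_i} (1-q_i)^{omega_i - 1} with 0^0 = 1, 1/0 = +oo:
   the i-th factor is 1/q_i if omega_i = 1 and 1/(1-q_i) if omega_i = 0. *)
Definition f_om (R : realType) (d : nat) (om : cube d) (q : 'I_d -> R) : \bar R :=
  (\prod_(i < d) inv_ext (if om i then q i else 1 - q i)%R)%E.

Definition Qset (R : realType) (d : nat) (P : cube d -> R) (om : cube d)
  : set ('I_d -> R) :=
  [set q | (forall i, 0 <= q i <= 1) /\
           forall nu : cube d, ((P om)%:E * f_om om q <= (P nu)%:E * f_om nu q)%E].

Definition open_cube (R : realType) (d : nat) : set ('I_d -> R) :=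
  [set q | forall i, 0 < q i < 1].

Definition ymap (R : realType) (d : nat) (om : cube d) (q : 'I_d -> R) : 'I_d -> R :=
  fun i => (1 - 2 * (om i)%:R) * ln (q i / (1 - q i)).

Definition Amat (R : realType) (d : nat) (om nu : cube d) (i : 'I_d) : R :=
  (nu i != om i)%:R.

Definition bvec (R : realType) (d : nat) (P : cube d -> R) (om nu : cube d) : R :=
  ln (P nu / P om).

(* Main.v *)
Require Import Defs.
From HB Require Import structures.
From mathcomp Require Import all_boot all_order all_algebra.
From mathcomp Require Import all_classical all_reals all_analysis.
From mathcomp Require Import ring lra.
Import Order.TTheory GRing.Theory Num.Theory.
Local Open Scope ring_scope.
Local Open Scope classical_set_scope.

Section Aux.
Variable R : realType.

Lemma sgn_sq (b : bool) : (1 - 2 * (b%:R : R)) * (1 - 2 * b%:R) = 1.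
Proof. by case: b => /=; rewrite ?mulr1 ?mulr0 ?subr0 ?mulr1; lra. Qed.

Lemma sgn_neq0 (b : bool) : (1 - 2 * (b%:R : R)) != 0.
Proof. by case: b => /=; rewrite ?mulr1 ?mulr0 ?subr0; apply/eqP; lra. Qed.

Lemma logit_inj (q q' : R) : 0 < q < 1 -> 0 < q' < 1 ->
  ln (q / (1 - q)) = ln (q' / (1 - q')) -> q = q'.
Proof.
move=> /andP[h0 h1] /andP[h0' h1'] E.
have p1 : 0 < q / (1 - q) by apply: divr_gt0; lra.
have p2 : 0 < q' / (1 - q') by apply: divr_gt0; lra.
have : q / (1 - q) = q' / (1 - q').
  by rewrite -(lnK p1) -(lnK p2) E.
move/eqP; rewrite eqr_div; [|apply/eqP; lra|apply/eqP; lra].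
move/eqP => H; lra.
Qed.

End Aux.


Lemma fom_fin (R : realType) (d : nat) (w : cube d) (q : 'I_d -> R) :
  open_cube q ->
  f_om w q = ((\prod_(i < d) (if w i then q i else 1 - q i))^-1)%:E.
Proof.
move=> hq; rewrite /f_om -prodfV -prodEFin; apply: eq_bigr => i _.
rewrite /inv_ext; have /andP[h0 h1] := hq i.
by case: (w i); rewrite (negbTE (_ : _ != 0)) //; apply/eqP; lra.
Qed.

Lemma key (R : realType) (d : nat) (P : cube d -> R) (om nu : cube d) (q : 'I_d -> R) :
  (forall nu : cube d, 0 < P nu) -> open_cube q ->
  ((P om)%:E * f_om om q <= (P nu)%:E * f_om nu q)%E <->
  \sum_(i < d) @Amat R d om nu i * ymap om q i <= bvec P om nu.
Proof.
move=> Ppos hq.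
pose r (w : cube d) i := if w i then q i else 1 - q i.
have rpos : forall w i, 0 < r w i.
  by move=> w i; rewrite /r; have /andP[h0 h1] := hq i; case: (w i); lra.
have E : \prod_(i < d) expR (@Amat R d om nu i * ymap om q i)
         = \prod_(i < d) (r nu i / r om i).
  apply: eq_bigr => i _; rewrite /Amat /ymap /r.
  have /andP[h0 h1] := hq i.
  have p1 : 0 < q i / (1 - q i) by apply: divr_gt0; lra.
  case: (om i); case: (nu i) => /=.
  - by rewrite mul0r expR0 divff //; apply/eqP; lra.
  - rewrite mul1r mulr1 (_ : 1 - 2 = -1) ?mulN1r; last by lra.
    by rewrite expRN lnK ?posrE // invf_div.
  - by rewrite mul1r mulr0 subr0 mul1r lnK ?posrE.
  - by rewrite mul0r expR0 divff //; apply/eqP; lra.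
rewrite !fom_fin // -!EFinM lee_fin /bvec.
have a0 : 0 < \prod_(i < d) r om i by apply: prodr_gt0.
have b0 : 0 < \prod_(i < d) r nu i by apply: prodr_gt0.
have c0 : 0 < P nu / P om by apply: divr_gt0.
rewrite -[_ <= ln _]ler_expR (lnK c0) expR_sum E big_split /= prodfV.
rewrite -/(r om) -/(r nu).
move: a0 b0 (Ppos om) (Ppos nu); set a := \prod_(i < d) r om i;
  set b := \prod_(i < d) r nu i => a0 b0 p0 p1.
rewrite -(ler_pM2r (mulr_gt0 (mulr_gt0 a0 b0) p0)).
have -> : P om * a^-1 * (a * b * P om) = P om * b * P om by field; apply/eqP; lra.
have -> : P nu * b^-1 * (a * b * P om) = P nu * a * P om by field; apply/eqP; lra.
rewrite -[b / a <= _](ler_pM2r (mulr_gt0 (mulr_gt0 a0 b0) p0)).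
have -> : b * a^-1 * (a * b * P om) = P om * b * b by field; apply/eqP; lra.
have -> : P nu / P om * (a * b * P om) = P nu * a * b by field; apply/eqP; lra.
by rewrite !ler_pM2r.
Qed.

Theorem corollary2 (R : realType) (d : nat) (P : cube d -> R) (om : cube d) :
  (1 <= d)%N ->
  (forall nu : cube d, 0 < P nu) ->
  \sum_(nu : cube d) P nu = 1 ->
  set_bij (@open_cube R d) setT (ymap om) /\
  ymap om @` (Qset P om `&` @open_cube R d) =
    [set y : 'I_d -> R | forall nu : cube d, nu != om ->
                           \sum_(i < d) @Amat R d om nu i * y i <= bvec P om nu].
Proof.
move=> _ Ppos _.
have surj : forall y : 'I_d -> R, exists2 q, open_cube q & ymap om q = y.
  move=> y.
  pose t i := (1 - 2 * (om i)%:R) * y i.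
  exists (fun i => expR (t i) / (1 + expR (t i))).
    move=> i; have e := expR_gt0 (t i); apply/andP; split.
      by apply: divr_gt0 => //; lra.
    by rewrite ltr_pdivrMr; lra.
  apply/funext => i; rewrite /ymap.
  have e := expR_gt0 (t i).
  have -> : expR (t i) / (1 + expR (t i)) / (1 - expR (t i) / (1 + expR (t i)))
            = expR (t i) by field; apply/andP; split; apply/eqP; lra.
  by rewrite expRK /t mulrA sgn_sq mul1r.
have bij : set_bij (@open_cube R d) setT (ymap om).
  split.
  - by move=> q _.
  - move=> q q'; rewrite !inE => hq hq' E.
    apply/funext => i.
    have := congr1 (fun f => f i) E; rewrite /ymap => /mulfI => /(_ (sgn_neq0 _ _)).
    exact: logit_inj.
  - move=> y _; have [q hq <-] := surj y; by exists q.
split => //.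
apply/seteqP; split.
- move=> y [q [[_ hQ] hq] <-] nu _; exact/(@key _ _ _ _ nu _ Ppos hq).
- move=> y hy; have [q hq qy] := surj y; exists q => //; split => //; split.
    by move=> i; have /andP[h0 h1] := hq i; apply/andP; split; apply: ltW.
  move=> nu; apply/(@key _ _ _ _ nu _ Ppos hq); rewrite qy.
  have [->|ne] := eqVneq nu om; last exact: hy.
  rewrite /bvec divff ?ln1; last by apply/eqP; have := Ppos om; lra.
  by rewrite big1 // => i _; rewrite /Amat eqxx mul0r.
Qed.
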